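(* Let $K$ be a binomial principal ideal domain. Every finitely generated $2$-nilpotent $K$-group without $K$-torsion is regular.
   Context: $K$-groups are nilpotent groups with exponents in the binomial domain $K$ (P. Hall). $Is(N)=\{x\in G: x^\alpha\in N\text{ for some }0\ne\alpha\in K\}$; $I(G)=Is(G')\cap Z(G)$; an addition is a $K$-subgroup $G_0\le Z(G)$ with $Z(G)=G_0\oplus I(G)$. $G$ is regular if $G=H\times G_0$ for some addition $G_0$ and some $K$-subgroup $H$ with $Is(H')\ge Z(H)$ (equivalently $Is(G'Z(G))=Is(G')Z(G)$). *)

(* Defs.v *)
From HB Require Import structures.
From mathcomp Require Import all_boot all_order all_algebra.
Set Implicit Arguments. Unset Strict Implicit. Unset Printing Implicit Defensive.
Import GRing.Theory.
Local Open Scope ring_scope.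

Definition is_ideal (K : comNzRingType) (I : K -> Prop) : Prop :=
  [/\ I 0, (forall x y, I x -> I y -> I (x + y)) &
      (forall r x, I x -> I (r * x))].

Definition is_PID (K : idomainType) : Prop :=
  forall I : K -> Prop, is_ideal I ->
    exists d : K, forall x, I x <-> exists r, x = r * d.

Definition is_binomial (K : idomainType) : Prop :=
  (forall n : nat, (0 < n)%N -> n%:R != 0 :> K) /\
  (forall (a : K) (n : nat),
      exists b : K, n`!%:R * b = \prod_(i < n) (a - i%:R)).

Record grp := Grp {
  gcar :> Type;
  gmul : gcar -> gcar -> gcar;
  ginv : gcar -> gcar;
  gone : gcar;
  gmulA : forall x y z, gmul x (gmul y z) = gmul (gmul x y) z;
  gmul1g : forall x, gmul gone x = x;
  gmulVg : forall x, gmul (ginv x) x = gone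
}.

Section Groups.
Variable G : grp.
Local Notation "x * y" := (gmul x y).
Local Notation "x ^-1" := (ginv x).
Local Notation "1" := (gone G).

Definition gcomm (x y : G) : G := x^-1 * y^-1 * x * y.
Definition gconj (x y : G) : G := y^-1 * x * y.

Definition central (z : G) : Prop := forall g : G, z * g = g * z.

Definition nil2 : Prop := forall x y : G, central (gcomm x y).

End Groups.

(* pw : G -> K -> G is the K-power map x |-> x^alpha.  Hall's axioms:
   (1) x^1 = x, x^a x^b = x^(a+b), (x^a)^b = x^(ab);
   (2) (y^-1 x y)^a = y^-1 x^a y;
   (3) x_1^a ... x_n^a = tau_1(x)^a tau_2(x)^C(a,2) ... tau_c(x)^C(a,c),
       tau_i the Hall-Petresco words.
   For a group of class <= 2 the Hall-Petresco words of index >= 3 are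
   trivial and (3) is equivalent to its case n = 2:
       x^a y^a = (xy)^a [x,y]^C(a,2),
   where C(a,2) is the unique b with 2b = a(a-1). *)
Definition is_nil2_Kgroup (K : idomainType) (G : grp) (pw : G -> K -> G) : Prop :=
  nil2 G /\ (forall x : G, pw x 1 = x) /\
  [/\
      (forall (x : G) a b, gmul (pw x a) (pw x b) = pw x (a + b)),
      (forall (x : G) a b, pw (pw x a) b = pw x (a * b)),
      (forall (x y : G) a, pw (gconj x y) a = gconj (pw x a) y) &
      (forall (x y : G) a c, 2%:R * c = a * (a - 1) ->
          gmul (pw x a) (pw y a) = gmul (pw (gmul x y) a) (pw (gcomm x y) c))].

Section KSub.
Variables (K : idomainType) (G : grp) (pw : G -> K -> G).
Local Notation "x * y" := (gmul x y).
Local Notation "1" := (gone G).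

Definition Ksubgroup (H : G -> Prop) : Prop :=
  [/\ H 1, (forall x y, H x -> H y -> H (x * y)),
      (forall x, H x -> H (ginv x)) & (forall x a, H x -> H (pw x a))].

Definition Kgen (S : G -> Prop) : G -> Prop :=
  fun x => forall H, Ksubgroup H -> (forall s, S s -> H s) -> H x.

Definition Kfin_gen : Prop :=
  exists (n : nat) (f : 'I_n -> G), forall x : G, Kgen (fun y => exists i, y = f i) x.

Definition Ktorsion_free : Prop :=
  forall (x : G) (a : K), a != 0 -> pw x a = 1 -> x = 1.

Definition Is (N : G -> Prop) : G -> Prop :=
  fun x => exists a : K, a != 0 /\ N (pw x a).

Definition Kderived (H : G -> Prop) : G -> Prop :=
  Kgen (fun c => exists x y, [/\ H x, H y & c = gcomm x y]).

Definition Zcenter (H : G -> Prop) : G -> Prop :=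
  fun z => H z /\ forall g, H g -> z * g = g * z.

Definition fullG : G -> Prop := fun _ => True.

Definition IG : G -> Prop :=
  fun x => Is (Kderived fullG) x /\ Zcenter fullG x.

Definition addition (G0 : G -> Prop) : Prop :=
  [/\ Ksubgroup G0,
      (forall x, G0 x -> Zcenter fullG x),
      (forall x, G0 x -> IG x -> x = 1) &
      (forall z, Zcenter fullG z -> exists a b, [/\ G0 a, IG b & z = a * b])].

Definition normal (H : G -> Prop) : Prop :=
  forall x y, H x -> H (gconj x y).

Definition direct_product (H N : G -> Prop) : Prop :=
  [/\ normal H, normal N,
      (forall x, H x -> N x -> x = 1) &
      (forall g, exists h n, [/\ H h, N n & g = h * n])].

Definition regular : Prop :=
  exists H G0 : G -> Prop,
    [/\ Ksubgroup H, addition G0, direct_product H G0 &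
        (forall z, Zcenter H z -> H z /\ Is (Kderived H) z)].

End KSub.

(* Main.v *)
Require Import Defs.
From HB Require Import structures.
From mathcomp Require Import all_boot all_order all_algebra.
From mathcomp Require Import boolp.

Module Aux.
Set Implicit Arguments. Unset Strict Implicit. Unset Printing Implicit Defensive.
Import GRing.Theory.
Local Open Scope ring_scope.

Section ModTheory.
Variables (K : idomainType) (V : lmodType K).

Definition lc (c : nat -> K) (s : seq V) : V := \sum_(i < size s) c i *: s`_i.

Lemma lc_nil c : lc c [::] = 0.
Proof. by rewrite /lc big_ord0. Qed.

Lemma lc_cons c x s : lc c (x :: s) = c 0%N *: x + lc (fun i => c i.+1) s.
Proof. by rewrite /lc /= big_ord_recl. Qed.

Lemma lc_cat c s1 s2 :
  lc c (s1 ++ s2) = lc c s1 + lc (fun i => c (size s1 + i)%N) s2.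
Proof.
rewrite /lc size_cat big_split_ord /=; congr (_ + _).
  by apply: eq_bigr => i _; rewrite nth_cat ltn_ord.
by apply: eq_bigr => i _; rewrite nth_cat ltnNge leq_addr /= addKn.
Qed.

Lemma lcD c d s : lc (fun i => c i + d i) s = lc c s + lc d s.
Proof. by rewrite /lc -big_split; apply: eq_bigr => i _; rewrite scalerDl. Qed.

Lemma lcZ a c s : lc (fun i => a * c i) s = a *: lc c s.
Proof. by rewrite /lc scaler_sumr; apply: eq_bigr => i _; rewrite scalerA. Qed.

Lemma lcN c s : lc (fun i => - c i) s = - lc c s.
Proof.
by rewrite -scaleN1r -lcZ; congr lc; apply: funext => i; rewrite mulN1r.
Qed.

Lemma lc_eq c d s : (forall i, (i < size s)%N -> c i = d i) -> lc c s = lc d s.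
Proof. by move=> H; apply: eq_bigr => i _; rewrite H. Qed.

Lemma lc0 c s : (forall i, (i < size s)%N -> c i = 0) -> lc c s = 0.
Proof. by move=> H; rewrite /lc big1 // => i _; rewrite H // scale0r. Qed.

Lemma lc_sum n (d : nat -> K) (F : nat -> nat -> K) b :
  \sum_(j < n) d j *: lc (F j) b = lc (fun i => \sum_(j < n) d j * F j i) b.
Proof.
rewrite /lc.
under eq_bigr do rewrite scaler_sumr.
rewrite exchange_big /=; apply: eq_bigr => i _.
by rewrite scaler_suml; apply: eq_bigr => j _; rewrite scalerA.
Qed.

Definition subm (L : V -> Prop) :=
  [/\ L 0, forall x y, L x -> L y -> L (x + y) & forall a x, L x -> L (a *: x)].

Lemma submN L x : subm L -> L x -> L (- x).
Proof. by case=> _ _ HZ Hx; rewrite -scaleN1r; apply: HZ. Qed.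

Lemma submB L x y : subm L -> L x -> L y -> L (x - y).
Proof. move=> HL Hx Hy; case: (HL) => _ HD _; apply: HD => //; exact: submN. Qed.

Definition allin (S : V -> Prop) s := forall i, (i < size s)%N -> S s`_i.

Lemma subm_lc L c s : subm L -> allin L s -> L (lc c s).
Proof.
move=> [H0 HD HZ] Hs; rewrite /lc; elim/big_ind: _ => //.
by move=> i _; apply: HZ; apply: Hs.
Qed.

Definition spans L S s := allin S s /\ forall x, S x -> exists c, L (x - lc c s).
Definition indep L s := forall c, L (lc c s) -> forall i, (i < size s)%N -> c i = 0.
Definition tfree (L S : V -> Prop) := forall a x, S x -> a != 0 -> L (a *: x) -> L x.

End ModTheory.

Section Free.
Variables (K : idomainType) (V : lmodType K).
Hypothesis hpid : is_PID K.

Lemma common_den (L : V -> Prop) g0 t : subm L ->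
  (forall j, (j < size t)%N -> exists a c, a != 0 /\ L (a *: t`_j - c *: g0)) ->
  exists a, a != 0 /\ forall d, exists k, L (a *: lc d t - k *: g0).
Proof.
move=> HL; case: (HL) => H0 HD HZ.
elim: t => [|x t IH] Ht.
  exists 1; split; first exact: oner_neq0.
  by move=> d; exists 0; rewrite lc_nil scaler0 scale0r subr0.
have [ax [cx [ax0 Hx]]] := Ht 0%N isT.
have [a' [a'0 Ha']] : exists a, a != 0 /\ forall d, exists k, L (a *: lc d t - k *: g0).
  by apply: IH => j Hj; apply: (Ht j.+1).
exists (ax * a'); split; first by rewrite mulf_neq0.
move=> d; have [k' Hk'] := Ha' (fun i => d i.+1).
exists (a' * d 0%N * cx + ax * k').
set y := lc (fun i => d i.+1) t in Hk' *.
have -> : (ax * a') *: lc d (x :: t) - (a' * d 0%N * cx + ax * k') *: g0 =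
   (a' * d 0%N) *: (ax *: x - cx *: g0) + ax *: (a' *: y - k' *: g0).
  rewrite lc_cons -/y !scalerBr !scalerA scalerDr scalerDl !scalerA.
  rewrite opprD addrACA; congr (_ *: _ - _ + (_ - _)).
  by rewrite -mulrA mulrC.
by apply: HD; apply: HZ.
Qed.


Lemma lc1 c (y : V) : lc c [:: y] = c 0%N *: y.
Proof. by rewrite lc_cons lc_nil addr0. Qed.

Lemma rank1 (L S : V -> Prop) g0 t : subm L -> subm S -> S g0 -> allin S t ->
  tfree L S ->
  (forall j, (j < size t)%N -> exists a c, a != 0 /\ L (a *: t`_j - c *: g0)) ->
  exists q, [/\ allin S q,
    (forall j, (j < size q)%N -> exists a c, a != 0 /\ L (a *: q`_j - c *: g0)),
    indep L q & forall d, exists c, L (lc d t - lc c q)].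
Proof.
move=> HL HS Sg0 St Htf Ht.
have [H0 HD HZ] := HL.
case: (pselect (L g0)) => Lg0.
  exists [::]; split => //.
  move=> d; exists (fun _ => 0); rewrite lc_nil subr0.
  apply: subm_lc => // j Hj.
  have [a [c [a0 Hac]]] := Ht j Hj.
  apply: (Htf a) => //; first exact: St.
  have -> : a *: t`_j = (a *: t`_j - c *: g0) + c *: g0 by rewrite subrK.
  by apply: HD => //; apply: HZ.
have [a [a0 Ha]] := common_den HL Ht.
pose I k := exists d, L (a *: lc d t - k *: g0).
have HI : is_ideal I.
  split.
  - exists (fun _ => 0); rewrite lc0 // scaler0 scale0r subr0 //.
  - move=> x y [d Hd] [d' Hd']; exists (fun i => d i + d' i).
    rewrite lcD scalerDr scalerDl opprD addrACA; exact: HD.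
  - move=> r x [d Hd]; exists (fun i => r * d i).
    rewrite lcZ scalerA mulrC -scalerA -scalerA -scalerBr; exact: HZ.
have [de Hde] := hpid HI.
have [dd Hdd] : I de by apply: (proj2 (Hde de)); exists 1; rewrite mul1r.
set y := lc dd t in Hdd.
have Sy : S y by exact: subm_lc HS St.
case: (eqVneq de 0) => de0.
  exists [::]; split => //.
  move=> d; exists (fun _ => 0); rewrite lc_nil subr0.
  have [k Hk] := Ha d.
  have [r Hr] : exists r, k = r * de by apply: (proj1 (Hde k)); exists d.
  rewrite Hr de0 mulr0 scale0r subr0 in Hk.
  apply: (Htf a) => //; exact: subm_lc HS St.
exists [:: y]; split.
- by case=> // _; rewrite /=.
- case=> // _; exists a, de; split => //.
- move=> c; rewrite lc1 => Lc; case=> // _.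
  case: (eqVneq (c 0%N) 0) => // c0; exfalso.
  apply: Lg0; apply: (Htf (c 0%N * de) g0 Sg0); first by rewrite mulf_neq0.
  have -> : (c 0%N * de) *: g0 = a *: (c 0%N *: y) - c 0%N *: (a *: y - de *: g0).
    by rewrite scalerBr opprB !scalerA mulrC addrC [c 0%N * a]mulrC addrNK.
  apply: submB => //; exact: HZ.
move=> d.
have [k Hk] := Ha d.
have [r Hr] : exists r, k = r * de by apply: (proj1 (Hde k)); exists d.
exists (fun _ => r); rewrite lc1.
apply: (Htf a) => //.
  apply: submB => //; [exact: subm_lc HS St | by case: HS => _ _; apply].
have -> : a *: (lc d t - r *: y) = (a *: lc d t - k *: g0) - r *: (a *: y - de *: g0).
  by rewrite Hr !scalerBr opprB !scalerA [r * a]mulrC addrA subrK.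
apply: submB => //; exact: HZ.
Qed.


Lemma combine_span (L L' S : V -> Prop) g b : subm L -> subm L' ->
  (forall x, L x -> L' x) -> subm S -> spans L S g -> spans L' S b -> indep L' b ->
  exists t, [/\ allin S t, allin L' t &
     forall x, S x -> L' x -> exists d, L (x - lc d t)].
Proof.
move=> HL HL' LL' HS [Sg Hg] [Sb Hb] Ib.
have : forall x, exists c : nat -> K, S x -> L' (x - lc c b).
  move=> x; case: (pselect (S x)) => Sx; last by exists (fun _ => 0).
  by have [c Hc] := Hb x Sx; exists c.
move/choice => [E HE].
pose f x := x - lc (E x) b.
exists (map f g); split.
- move=> j; rewrite size_map => Hj; rewrite (nth_map 0) //.
  by apply: submB => //; [exact: Sg | exact: subm_lc].
- move=> j; rewrite size_map => Hj; rewrite (nth_map 0) //.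
  by apply: HE; exact: Sg.
move=> x Sx L'x.
have [d Hd] := Hg x Sx.
pose F i := \sum_(j < size g) d j * E g`_j i.
have Hdt : lc d (map f g) = lc d g - lc F b.
  rewrite /F -(lc_sum (size g) d (fun j i => E g`_j i) b) [lc d (map _ _)]/lc [lc d g]/lc size_map -sumrB.
  apply: eq_bigr => j _.
  by rewrite (nth_map 0) // /f scalerBr.
have L'F : L' (lc F b).
  have -> : lc F b = (x - lc d (map f g)) - (x - lc d g).
    by rewrite Hdt opprB opprB addrC addrA subrK addrC subrK.
  apply: submB => //; last exact: LL'.
  apply: submB => //; apply: subm_lc => // j; rewrite size_map => Hj.
  rewrite (nth_map 0) //; apply: HE; exact: Sg.
have F0 : lc F b = 0 by apply: lc0; exact: Ib.
by exists d; rewrite Hdt F0 subr0.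
Qed.

Lemma combine_basis (L L' S : V -> Prop) q b : subm L -> subm L' ->
  (forall x, L x -> L' x) -> allin L' q -> spans L' S b -> indep L' b ->
  allin S q -> indep L q -> (forall x, S x -> L' x -> exists c, L (x - lc c q)) ->
  subm S -> spans L S (q ++ b) /\ indep L (q ++ b).
Proof.
move=> HL HL' LL' L'q [Sb Hb] Ib Sq Iq Hq HS; split; first split.
- move=> i; rewrite size_cat => Hi; rewrite nth_cat; case: ltnP => Hiq.
    exact: Sq.
  by apply: Sb; rewrite -(ltn_add2l (size q)) subnKC.
- move=> x Sx.
  have [e He] := Hb x Sx.
  have [c Hc] := Hq (x - lc e b) (submB HS Sx (subm_lc _ HS Sb)) He.
  exists (fun i => if (i < size q)%N then c i else e (i - size q)%N).
  rewrite lc_cat (lc_eq (d:=c) (s:=q)); last by move=> i ->.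
  rewrite (lc_eq (d:=e) (s:=b)); last by move=> i _; rewrite ltnNge leq_addr /= addKn.
  by rewrite opprD addrA addrAC.
move=> h Lh i Hi.
rewrite lc_cat in Lh.
set h' := fun i => h (size q + i)%N in Lh.
have L'h' : L' (lc h' b).
  have -> : lc h' b = (lc h q + lc h' b) - lc h q by rewrite addrC addKr.
  by apply: submB => //; [exact: LL' | exact: subm_lc].
have h'0 := Ib _ L'h'.
rewrite (lc0 h'0) addr0 in Lh.
rewrite size_cat in Hi.
case: (ltnP i (size q)) => Hq'; first exact: Iq.
rewrite -(subnKC Hq'); apply: h'0.
by rewrite -(ltn_add2l (size q)) subnKC.
Qed.

Theorem free_thm n : forall (L S : V -> Prop) g, size g = n -> subm L -> subm S ->
  spans L S g -> tfree L S -> exists b, spans L S b /\ indep L b.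
Proof.
elim: n => [|n IH] L S g Hsz HL HS [Sg Hg] Htf.
  exists g; split; first by split.
  by move=> c _ i; rewrite Hsz ltn0.
case: g Hsz Sg Hg => // g0 g' [Hsz] Sg Hg.
pose L' x := exists a c, a != 0 /\ L (a *: x - c *: g0).
have [H0 HD HZ] := HL.
have HL' : subm L'.
  split.
  - exists 1, 0; split; [exact: oner_neq0 | by rewrite scaler0 scale0r subr0].
  - move=> x y [a [c [a0 Hx]]] [a' [c' [a'0 Hy]]].
    exists (a * a'), (a' * c + a * c'); split; first by rewrite mulf_neq0.
    have -> : (a * a') *: (x + y) - (a' * c + a * c') *: g0 =
        a' *: (a *: x - c *: g0) + a *: (a' *: y - c' *: g0).
      rewrite !scalerBr !scalerA scalerDr scalerDl opprD addrACA.
      by rewrite [a' * a]mulrC.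
    by apply: HD; apply: HZ.
  - move=> r x [a [c [a0 Hx]]]; exists a, (r * c); split => //.
    have -> : a *: (r *: x) - (r * c) *: g0 = r *: (a *: x - c *: g0).
      by rewrite scalerBr !scalerA mulrC.
    exact: HZ.
have LL' : forall x, L x -> L' x.
  move=> x Lx; exists 1, 0; split; first exact: oner_neq0.
  by rewrite scale1r scale0r subr0.
have Sg0 : S g0 := Sg 0%N isT.
have Sg' : allin S g' := fun i Hi => Sg i.+1 Hi.
have Hsp' : spans L' S g'.
  split => // x Sx; have [c Hc] := Hg x Sx.
  exists (fun i => c i.+1), 1, (c 0%N); split; first exact: oner_neq0.
  by rewrite scale1r; rewrite lc_cons opprD addrA addrAC in Hc.
have Htf' : tfree L' S.
  move=> a x Sx a0 [b [c [b0 Hb]]]; exists (b * a), c; split.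
    by rewrite mulf_neq0.
  by rewrite -scalerA.
have [b [Hsb Ib]] := IH L' S g' Hsz HL' HS Hsp' Htf'.
have [t [St L't Ht]] := combine_span HL HL' LL' HS (conj Sg Hg) Hsb Ib.
have [q [Sq L'q Iq Hq]] := rank1 HL HS Sg0 St Htf L't.
exists (q ++ b); apply: (combine_basis HL HL' LL' _ Hsb Ib Sq Iq _ HS).
  exact: L'q.
move=> x Sx L'x; have [d Hd] := Ht x Sx L'x; have [c Hc] := Hq d; exists c.
have -> : x - lc c q = (x - lc d t) + (lc d t - lc c q) by rewrite addrA subrK.
exact: HD.
Qed.


Lemma subm0 : subm (fun x : V => x = 0).
Proof. by split => // [x y -> ->|a x ->]; rewrite ?addr0 ?scaler0. Qed.

Lemma adapted (s : seq V) (P : V -> Prop) :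
  (forall x, exists c, x = lc c s) ->
  (forall (a : K) (x : V), a != 0 -> a *: x = 0 -> x = 0) -> subm P ->
  (forall (a : K) (x : V), a != 0 -> P (a *: x) -> P x) ->
  exists p m, [/\ allin P p, forall x, exists c d, x = lc c p + lc d m,
    (forall c d, lc c p + lc d m = 0 -> forall i, (i < size p)%N -> c i = 0) &
    (forall d, P (lc d m) -> forall i, (i < size m)%N -> d i = 0)].
Proof.
move=> Hs Htf HP Hpure.
have [P0 _ _] := HP.
have HT : subm (fun _ : V => True) by [].
have sp1 : spans P (fun _ => True) s.
  split => // x _; have [c ->] := Hs x; exists c; by rewrite subrr.
have [m [Hsm Im]] := free_thm (erefl _) HP HT sp1 (fun a x _ a0 => Hpure a x a0).
have sp0 : spans (fun x => x = 0) (fun _ => True) s.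
  split => // x _; have [c ->] := Hs x; exists c; by rewrite subrr.
have [t [_ Pt Ht]] := combine_span subm0 HP (fun x (e : x = 0) => ltac:(by rewrite e)) HT sp0 Hsm Im.
have spt : spans (fun x => x = 0) P t by split => // x Px; exact: Ht.
have [p [[Pp Hp] Ip]] := free_thm (erefl _) subm0 HP spt (fun a x _ a0 => Htf a x a0).
have [[_ Hpm] Ipm] := combine_basis subm0 HP (fun x (e : x = 0) => ltac:(by rewrite e))
   Pp Hsm Im (fun _ _ => I) Ip (fun x _ Px => Hp x Px) HT.
exists p, m; split => //.
  move=> x; have [h Hh] := Hpm x I.
  exists h, (fun i => h (size p + i)%N).
  by move/eqP: Hh; rewrite subr_eq0 lc_cat => /eqP.
move=> c d H0 i Hi.
pose h i := if (i < size p)%N then c i else d (i - size p)%N.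
have : lc h (p ++ m) = 0.
  rewrite lc_cat (lc_eq (d:=c) (s:=p)); last by move=> j; rewrite /h => ->.
  rewrite (lc_eq (d:=d) (s:=m)) //.
  by move=> j _; rewrite /h ltnNge leq_addr /= addKn.
move/Ipm => /(_ i); rewrite size_cat /h Hi => ->//.
exact: ltn_addr.
Qed.

End Free.

Section GrpBasic.
Variable G : grp.
Local Infix "**" := (@gmul G) (at level 40, left associativity).
Local Notation "1" := (gone G).
Local Notation inv := (@ginv G).

Lemma mulgV (x : G) : x ** inv x = 1.
Proof.
rewrite -{1}(gmul1g (x ** inv x)) -(gmulVg (inv x)).
by rewrite -gmulA [inv x ** (x ** inv x)]gmulA gmulVg gmul1g.
Qed.

Lemma mulg1 (x : G) : x ** 1 = x.
Proof. by rewrite -(gmulVg x) gmulA mulgV gmul1g. Qed.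

Lemma mulKg (x y : G) : inv x ** (x ** y) = y.
Proof. by rewrite gmulA gmulVg gmul1g. Qed.

Lemma mulKVg (x y : G) : x ** (inv x ** y) = y.
Proof. by rewrite gmulA mulgV gmul1g. Qed.

Lemma mulgK (x y : G) : x ** y ** inv y = x.
Proof. by rewrite -gmulA mulgV mulg1. Qed.

Lemma mulgKV (x y : G) : x ** inv y ** y = x.
Proof. by rewrite -gmulA gmulVg mulg1. Qed.

Lemma mulgI (x y z : G) : x ** y = x ** z -> y = z.
Proof. by move=> H; rewrite -(mulKg x y) H mulKg. Qed.

Lemma mulIg (x y z : G) : y ** x = z ** x -> y = z.
Proof. by move=> H; rewrite -(mulgK y x) H mulgK. Qed.

Lemma invgK (x : G) : inv (inv x) = x.
Proof. by apply: (@mulIg (inv x)); rewrite gmulVg mulgV. Qed.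

Lemma invMg (x y : G) : inv (x ** y) = inv y ** inv x.
Proof.
apply: (@mulgI (x ** y)); rewrite mulgV.
by rewrite -gmulA [y ** _]gmulA mulgV gmul1g mulgV.
Qed.

Lemma invg1 : inv 1 = 1.
Proof. by rewrite -{2}(gmulVg 1) mulg1. Qed.

Lemma inv_uniq (x y : G) : x ** y = 1 -> y = inv x.
Proof. by move=> H; apply: (@mulgI x); rewrite H mulgV. Qed.

Lemma eq_mulVg1 (x y : G) : inv x ** y = 1 -> y = x.
Proof. by move=> H; rewrite -(mulKVg x y) H mulg1. Qed.

Lemma gcommE (x y : G) : gcomm x y = inv (y ** x) ** (x ** y).
Proof. by rewrite /gcomm invMg !gmulA. Qed.

Lemma gcomm1 (x y : G) : gcomm x y = 1 -> x ** y = y ** x.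
Proof. by rewrite gcommE => /eq_mulVg1. Qed.

Lemma gcomm_1 (x y : G) : x ** y = y ** x -> gcomm x y = 1.
Proof. by rewrite gcommE => ->; rewrite gmulVg. Qed.

Lemma gconjE (x y : G) : gconj x y = x ** gcomm x y.
Proof. by rewrite /gconj /gcomm !gmulA mulgV gmul1g. Qed.

Lemma gconj_id (x y : G) : gconj x y = x -> x ** y = y ** x.
Proof. by rewrite /gconj => H; rewrite -{2}H -!gmulA mulKVg. Qed.

Lemma gconj_id' (x y : G) : x ** y = y ** x -> gconj x y = x.
Proof. by rewrite /gconj -gmulA => ->; rewrite mulKg. Qed.

End GrpBasic.

Definition hyps (K : idomainType) (G : grp) (pw : G -> K -> G) :=
  is_nil2_Kgroup pw /\ Ktorsion_free pw /\ is_binomial K.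

Definition DD (K : idomainType) (G : grp) (pw : G -> K -> G) := Kderived pw (@fullG G).
Definition Ii (K : idomainType) (G : grp) (pw : G -> K -> G) := Is pw (DD pw).
Definition eqv (K : idomainType) (G : grp) (pw : G -> K -> G) (x y : G) :=
  Ii pw (gmul (ginv x) y).
Definition Qt (K : idomainType) (G : grp) (pw : G -> K -> G) (h : hyps pw) : Type :=
  {C : G -> Prop | exists x : G, C = eqv pw x}.

Section KGrp.
Variables (K : idomainType) (G : grp) (pw : G -> K -> G).
Variable h : hyps pw.
Let hKG : is_nil2_Kgroup pw := proj1 h.
Let htf : Ktorsion_free pw := proj1 (proj2 h).
Let hbin : is_binomial K := proj2 (proj2 h).
Local Infix "**" := (@gmul G) (at level 40, left associativity).
Local Notation "1" := (gone G).
Local Notation inv := (@ginv G).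

Lemma pw1 x : pw x 1%R = x.
Proof. by case: hKG => _ [H _]. Qed.
Lemma pwD x a b : pw x a ** pw x b = pw x (a + b).
Proof. by case: hKG => _ [_ [H _ _ _]]. Qed.
Lemma pwM x a b : pw (pw x a) b = pw x (a * b).
Proof. by case: hKG => _ [_ [_ H _ _]]. Qed.
Lemma pwJ x y a : pw (gconj x y) a = gconj (pw x a) y.
Proof. by case: hKG => _ [_ [_ _ H _]]. Qed.
Lemma pwHP x y a c : 2%:R * c = a * (a - 1) ->
  pw x a ** pw y a = pw (x ** y) a ** pw (gcomm x y) c.
Proof. by case: hKG => _ [_ [_ _ _ H]]; apply: H. Qed.
Lemma comm_central x y g : gcomm x y ** g = g ** gcomm x y.
Proof. by case: hKG => H _; apply: H. Qed.

Lemma binom2 a : exists c : K, 2%:R * c = a * (a - 1).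
Proof.
case: hbin => _ H; have [b Hb] := H a 2%N.
exists b; rewrite Hb !big_ord_recl big_ord0 /= mulr1 subr0.
by congr (_ * (_ - _)).
Qed.

Lemma pw0 x : pw x 0 = 1.
Proof.
apply: (@mulgI _ (pw x 0)); rewrite mulg1 pwD addr0 //.
Qed.

Lemma pw_1 a : pw 1 a = 1.
Proof. by rewrite -(pw0 1) pwM mul0r. Qed.

Lemma pwN x a : pw x (- a) = inv (pw x a).
Proof. by apply: inv_uniq; rewrite pwD subrr pw0. Qed.

Lemma pwV x a : pw (inv x) a = inv (pw x a).
Proof.
have -> : inv x = pw x (-1) by rewrite pwN pw1.
by rewrite pwM mulN1r pwN.
Qed.

Lemma pw_comm x y a : x ** y = y ** x -> pw (x ** y) a = pw x a ** pw y a.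
Proof.
move=> H; have [c Hc] := binom2 a.
by rewrite (pwHP x y Hc) (gcomm_1 H) pw_1 mulg1.
Qed.

Lemma pw_gcomm x g a : pw (gcomm x g) a = gcomm (pw x a) g.
Proof.
have H := pwJ x g a.
rewrite gconjE (pw_comm _ (esym (comm_central x g x))) gconjE in H.
exact: mulgI H.
Qed.


Lemma Kgen_sub S : Ksubgroup pw (Kgen pw S).
Proof.
split.
- by move=> H [].
- by move=> x y Hx Hy H HH HS; case: (HH) => _ HM _ _; apply: HM; [apply: Hx | apply: Hy].
- by move=> x Hx H HH HS; case: (HH) => _ _ HV _; apply: HV; apply: Hx.
- by move=> x a Hx H HH HS; case: (HH) => _ _ _ HP; apply: HP; apply: Hx.
Qed.

Lemma Kgen_in (S : G -> Prop) s : S s -> Kgen pw S s.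
Proof. by move=> Ss H _ HS; apply: HS. Qed.

Lemma Kgen_min (S H : G -> Prop) : Ksubgroup pw H -> (forall s, S s -> H s) ->
  forall x, Kgen pw S x -> H x.
Proof. by move=> HH HS x Hx; apply: Hx. Qed.

Definition Zc (z : G) := forall g, z ** g = g ** z.

Lemma Zc_sub : Ksubgroup pw Zc.
Proof.
split.
- by move=> g; rewrite gmul1g mulg1.
- by move=> x y Hx Hy g; rewrite -gmulA Hy gmulA Hx gmulA.
- move=> x Hx g; apply: (@mulgI _ x).
  by rewrite mulKVg gmulA Hx mulgK.
- move=> x a Hx g; apply: gconj_id.
  by rewrite -pwJ gconj_id'.
Qed.

Lemma Zpow_pure x a : a != 0 -> Zc (pw x a) -> Zc x.
Proof.
move=> a0 Hx g; apply: gcomm1; apply: (htf a0).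
by rewrite pw_gcomm; apply: gcomm_1.
Qed.

Local Notation DD := (DD pw).
Local Notation Ii := (Ii pw).
Local Notation eqv := (eqv pw).

Lemma D_sub : Ksubgroup pw DD.
Proof. exact: Kgen_sub. Qed.

Lemma Dcomm x y : DD (gcomm x y).
Proof. by apply: Kgen_in; exists x, y. Qed.

Lemma D_Z x : DD x -> Zc x.
Proof.
apply: Kgen_min; first exact: Zc_sub.
by move=> s [x' [y' [_ _ ->]]] g; apply: comm_central.
Qed.

Lemma Ii_Z x : Ii x -> Zc x.
Proof. by move=> [a [a0 Ha]]; apply: (Zpow_pure a0); apply: D_Z. Qed.

Lemma D_Ii x : DD x -> Ii x.
Proof. by move=> Dx; exists 1%R; rewrite pw1 oner_neq0. Qed.

Lemma Ii_sub : Ksubgroup pw Ii.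
Proof.
have [D1 DM DV DP] := D_sub.
split.
- by apply: D_Ii.
- move=> x y Hx Hy; have Zx := Ii_Z Hx; have Zy := Ii_Z Hy.
  case: Hx Hy => [a [a0 Ha]] [b [b0 Hb]]; exists (a * b); split.
    by rewrite mulf_neq0.
  rewrite pw_comm //.
  rewrite -pwM [a * b]mulrC -pwM.
  by apply: DM; apply: DP.
- move=> x [a [a0 Ha]]; exists a; split => //; rewrite pwV; exact: DV.
- move=> x b [a [a0 Ha]]; exists a; split => //.
  by rewrite pwM mulrC -pwM; apply: DP.
Qed.


Lemma Ii1 : Ii 1.
Proof. by case: Ii_sub. Qed.
Lemma IiM x y : Ii x -> Ii y -> Ii (x ** y).
Proof. by case: Ii_sub => _ H _ _; apply: H. Qed.
Lemma IiV x : Ii x -> Ii (inv x).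
Proof. by case: Ii_sub => _ _ H _; apply: H. Qed.
Lemma IiP x a : Ii x -> Ii (pw x a).
Proof. by case: Ii_sub => _ _ _ H; apply: H. Qed.

Lemma eqv_refl x : eqv x x.
Proof. by rewrite /eqv gmulVg; exact: Ii1. Qed.

Lemma eqv_sym x y : eqv x y -> eqv y x.
Proof. by rewrite /eqv => H; have := IiV H; rewrite invMg invgK. Qed.

Lemma eqv_trans x y z : eqv x y -> eqv y z -> eqv x z.
Proof.
rewrite /eqv => H1 H2; have := IiM H1 H2.
by rewrite gmulA mulgK.
Qed.

Lemma eqv_mul x x' y y' : eqv x x' -> eqv y y' -> eqv (x ** y) (x' ** y').
Proof.
rewrite /eqv => H1 H2.
have [u H1' ->] : exists2 u, Ii u & x' = x ** u by exists (inv x ** x'); rewrite ?mulKVg.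
have Zu := Ii_Z H1'.
have -> : inv (x ** y) ** (x ** u ** y') = u ** (inv y ** y').
  by rewrite invMg -!gmulA mulKg gmulA -Zu -gmulA.
exact: IiM.
Qed.

Lemma eqv_inv x x' : eqv x x' -> eqv (inv x) (inv x').
Proof.
rewrite /eqv => H1.
have [u H1' ->] : exists2 u, Ii u & x' = x ** u by exists (inv x ** x'); rewrite ?mulKVg.
have Zu := Zc_sub; case: Zu => _ _ ZV _.
have Zu := ZV _ (Ii_Z H1').
rewrite invgK invMg gmulA -Zu mulgK.
exact: IiV.
Qed.

Lemma eqv_pw x x' a : eqv x x' -> eqv (pw x a) (pw x' a).
Proof.
rewrite /eqv => H1.
have [u H1' ->] : exists2 u, Ii u & x' = x ** u by exists (inv x ** x'); rewrite ?mulKVg.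
rewrite pw_comm; last by rewrite (Ii_Z H1').
rewrite mulKg; exact: IiP.
Qed.

Lemma eqv_comm x y : eqv (x ** y) (y ** x).
Proof. by rewrite /eqv -gcommE; apply: D_Ii; apply: Dcomm. Qed.

Local Notation Q := (Qt h).
HB.instance Definition _ := gen_eqMixin Q.
HB.instance Definition _ := gen_choiceMixin Q.

Definition mk (x : G) : Q := exist _ (eqv x) (ex_intro _ x erefl).
Definition repr (q : Q) : G := projT1 (cid (proj2_sig q)).

Lemma reprK q : mk (repr q) = q.
Proof.
case: q => C p; rewrite /mk /repr /=; case: (cid p) => x Hx /=.
by apply: eq_exist; rewrite Hx.
Qed.

Lemma mk_eq x y : mk x = mk y <-> eqv x y.
Proof.
split.
  move=> /(congr1 (@proj1_sig _ _)) /= E.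
  by rewrite E; apply: eqv_refl.
move=> H; apply: eq_exist; apply: funext => z; apply: propext; split.
  by apply: eqv_trans; apply: eqv_sym.
exact: eqv_trans.
Qed.

Lemma eqv_repr x : eqv (repr (mk x)) x.
Proof. by apply/mk_eq; rewrite reprK. Qed.

Lemma Q_ind (P : Q -> Prop) : (forall x, P (mk x)) -> forall q, P q.
Proof. by move=> H q; rewrite -(reprK q). Qed.

Definition addQ (q r : Q) := mk (repr q ** repr r).
Definition oppQ (q : Q) := mk (inv (repr q)).
Definition zeroQ : Q := mk 1.
Definition scaleQ (a : K) (q : Q) := mk (pw (repr q) a).

Lemma addQ_mk x y : addQ (mk x) (mk y) = mk (x ** y).
Proof. by apply/mk_eq; apply: eqv_mul; apply: eqv_repr. Qed.
Lemma oppQ_mk x : oppQ (mk x) = mk (inv x).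
Proof. by apply/mk_eq; apply: eqv_inv; apply: eqv_repr. Qed.
Lemma scaleQ_mk a x : scaleQ a (mk x) = mk (pw x a).
Proof. by apply/mk_eq; apply: eqv_pw; apply: eqv_repr. Qed.

Lemma addQA : associative addQ.
Proof.
by elim/Q_ind => x; elim/Q_ind => y; elim/Q_ind => z; rewrite !addQ_mk gmulA.
Qed.
Lemma addQC : commutative addQ.
Proof.
by elim/Q_ind => x; elim/Q_ind => y; rewrite !addQ_mk; apply/mk_eq; apply: eqv_comm.
Qed.
Lemma add0Q : left_id zeroQ addQ.
Proof. by elim/Q_ind => x; rewrite /zeroQ addQ_mk gmul1g. Qed.
Lemma addNQ : left_inverse zeroQ oppQ addQ.
Proof. by elim/Q_ind => x; rewrite oppQ_mk addQ_mk gmulVg. Qed.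

HB.instance Definition _ := GRing.isZmodule.Build Q addQA addQC add0Q addNQ.

Lemma scaleQA a b v : scaleQ a (scaleQ b v) = scaleQ (a * b) v.
Proof. by elim/Q_ind: v => x; rewrite !scaleQ_mk pwM mulrC. Qed.
Lemma scaleQ1 : left_id 1%R scaleQ.
Proof. by elim/Q_ind => x; rewrite scaleQ_mk pw1. Qed.
Lemma scaleQDr : right_distributive scaleQ +%R.
Proof.
move=> a; elim/Q_ind => x; elim/Q_ind => y.
have E : forall q r : Q, q + r = addQ q r by [].
rewrite !E addQ_mk !scaleQ_mk addQ_mk; apply/mk_eq.
have [c Hc] := binom2 a.
rewrite /eqv (pwHP x y Hc) mulKg.
by apply: IiP; apply: D_Ii; apply: Dcomm.
Qed.
Lemma scaleQDl v : {morph scaleQ^~ v: a b / a + b}.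
Proof.
elim/Q_ind: v => x a b.
have E : forall q r : Q, q + r = addQ q r by [].
by rewrite E !scaleQ_mk addQ_mk pwD.
Qed.

HB.instance Definition _ := GRing.Zmodule_isLmodule.Build K Q scaleQA scaleQ1 scaleQDr scaleQDl.


Lemma zeroQE : (0 : Q) = mk 1.
Proof. by []. Qed.
Lemma addQE x y : mk x + mk y = mk (x ** y).
Proof. exact: addQ_mk. Qed.
Lemma oppQE x : - mk x = mk (inv x).
Proof. exact: oppQ_mk. Qed.
Lemma scaleQE a x : a *: mk x = mk (pw x a).
Proof. exact: scaleQ_mk. Qed.

Lemma mk_eq0 x : mk x = 0 <-> Ii x.
Proof.
rewrite zeroQE; split.
  by move/mk_eq/eqv_sym; rewrite /eqv invg1 gmul1g.
by move=> Hx; apply/mk_eq; apply: eqv_sym; rewrite /eqv invg1 gmul1g.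
Qed.

Lemma Q_tf (a : K) (q : Q) : a != 0 -> a *: q = 0 -> q = 0.
Proof.
move=> a0; elim/Q_ind: q => x; rewrite scaleQE => /mk_eq0 [b [b0 Hb]].
apply/mk_eq0; exists (a * b); split; first by rewrite mulf_neq0.
by rewrite -pwM.
Qed.

Definition PQ (q : Q) := exists z, Zc z /\ q = mk z.

Lemma PQ_subm : subm PQ.
Proof.
have [Z1 ZM ZV ZP] := Zc_sub.
split.
- by exists 1; split.
- by move=> _ _ [z [Zz ->]] [z' [Zz' ->]]; exists (z ** z'); rewrite addQE; split => //; apply: ZM.
- by move=> a _ [z [Zz ->]]; exists (pw z a); rewrite scaleQE; split => //; apply: ZP.
Qed.

Lemma PQ_pure (a : K) (q : Q) : a != 0 -> PQ (a *: q) -> PQ q.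
Proof.
move=> a0; elim/Q_ind: q => x; rewrite scaleQE => -[z [Zz /mk_eq Hz]].
exists x; split => //; apply: (Zpow_pure a0).
have [Z1 ZM ZV ZP] := Zc_sub.
have -> : pw x a = z ** inv (inv (pw x a) ** z).
  by rewrite invMg invgK gmulA mulgV gmul1g.
apply: ZM => //; apply: ZV; exact: Ii_Z.
Qed.

Lemma lc_delta (V : lmodType K) (s : seq V) i : (i < size s)%N ->
  lc (fun j => (j == i)%:R) s = s`_i.
Proof.
elim: s i => [|x s IH] [|i] //= Hi; rewrite lc_cons /=.
  by rewrite scale1r lc0 ?addr0.
by rewrite scale0r add0r IH.
Qed.

Variable hfg : Kfin_gen pw.

Lemma Q_span : exists s : seq Q, forall q, exists c, q = lc c s.
Proof.
case: hfg => n [f Hf].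
exists (map (fun i => mk (f i)) (enum 'I_n)).
pose s := map (fun i => mk (f i)) (enum 'I_n).
pose H0 g := exists c, mk g = lc c s.
have HH0 : Ksubgroup pw H0.
  split.
  - by exists (fun _ => 0); rewrite lc0.
  - move=> x y [c Hc] [d Hd]; exists (fun i => c i + d i).
    by rewrite lcD -Hc -Hd addQE.
  - move=> x [c Hc]; exists (fun i => - c i).
    by rewrite lcN -Hc oppQE.
  - move=> x a [c Hc]; exists (fun i => a * c i).
    by rewrite lcZ -Hc scaleQE.
elim/Q_ind => x.
apply: (Kgen_min HH0 _ (Hf x)).
move=> _ [i ->]; exists (fun j : nat => (j == i)%:R).
rewrite lc_delta; last by rewrite size_map size_enum_ord.
by rewrite (nth_map i) ?size_enum_ord // nth_ord_enum.
Qed.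


Fixpoint prl (zl : nat -> G) (l : seq nat) (c : nat -> K) : G :=
  if l is i :: l' then pw (zl i) (c i) ** prl zl l' c else 1.

Section Prl.
Variable zl : nat -> G.
Hypothesis Hz : forall i, Zc (zl i).

Lemma prl_Z l c : Zc (prl zl l c).
Proof.
have [Z1 ZM ZV ZP] := Zc_sub.
by elim: l => [|i l IH] //=; apply: ZM => //; apply: ZP.
Qed.

Lemma prl_mul l c d : prl zl l c ** prl zl l d = prl zl l (fun i => c i + d i).
Proof.
elim: l => [|i l IH] /=; first by rewrite gmul1g.
rewrite -pwD -IH -!gmulA; congr (_ ** _).
by rewrite gmulA (prl_Z l c) -gmulA.
Qed.

Lemma prl0 l c : (forall i, i \in l -> c i = 0) -> prl zl l c = 1.
Proof.
elim: l => [|i l IH] //= Hc.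
rewrite Hc ?mem_head // pw0 gmul1g IH // => j Hj.
by apply: Hc; rewrite in_cons Hj orbT.
Qed.

Lemma prl_inv l c : inv (prl zl l c) = prl zl l (fun i => - c i).
Proof.
symmetry; apply: inv_uniq; rewrite prl_mul prl0 // => i _; exact: subrr.
Qed.

Lemma prl_pw l c a : pw (prl zl l c) a = prl zl l (fun i => a * c i).
Proof.
elim: l => [|i l IH] /=; first exact: pw_1.
rewrite pw_comm; last by rewrite (prl_Z l c).
by rewrite pwM IH mulrC.
Qed.

Lemma mk_prl l c : mk (prl zl l c) = \sum_(i <- l) c i *: mk (zl i).
Proof.
elim: l => [|i l IH] /=; first by rewrite big_nil.
by rewrite big_cons -IH scaleQE addQE.
Qed.

End Prl.


Lemma invM_central a b c : Zc b -> inv (a ** b) ** (c ** b) = inv a ** c.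
Proof.
move=> Hb; have [_ _ ZV _] := Zc_sub.
by rewrite invMg -Hb (ZV _ Hb) -gmulA mulKg.
Qed.

Lemma gcomm_central x y n n' : Zc n -> Zc n' ->
  gcomm (x ** n) (y ** n') = gcomm x y.
Proof.
move=> Hn Hn'; have [_ ZM _ _] := Zc_sub.
have E1 : y ** n' ** (x ** n) = y ** x ** (n' ** n).
  by rewrite -!gmulA (gmulA n') Hn' -gmulA.
have E2 : x ** n ** (y ** n') = x ** y ** (n' ** n).
  by rewrite -!gmulA (gmulA n) Hn -gmulA Hn.
by rewrite !gcommE E1 E2 invM_central //; apply: ZM.
Qed.

Variable hpid : is_PID K.

Lemma regular_main : regular pw.
Proof.
have [Z1 ZM ZV ZP] := Zc_sub.
have [s Hs] := Q_span.
have [p [m [Pp Hpm Ip Im]]] := adapted hpid Hs Q_tf PQ_subm PQ_pure.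
have : forall i, exists z, Zc z /\ ((i < size p)%N -> p`_i = mk z).
  move=> i; case: (ltnP i (size p)) => Hi.
    by have [z [Zz E]] := Pp i Hi; exists z.
  by exists 1; split => // Hi'; exfalso; move: Hi'; rewrite ltnNge Hi.
move/choice => [zl Hzl].
have Hz : forall i, Zc (zl i) by move=> i; case: (Hzl i).
pose P0 c := prl zl (iota 0 (size p)) c.
have mkP0 : forall c, mk (P0 c) = lc c p.
  move=> c; rewrite /P0 mk_prl /lc -(big_mkord xpredT (fun i => c i *: p`_i)).
  rewrite /index_iota subn0 big_seq_cond [RHS]big_seq_cond; apply: eq_bigr => i.
  rewrite andbT mem_iota add0n => /andP [_ Hi].
  by case: (Hzl i) => _ ->.
have P0Z : forall c, Zc (P0 c) := fun c => prl_Z Hz _ c.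
have P0_1 : forall c, (forall i, (i < size p)%N -> c i = 0) -> P0 c = 1.
  move=> c Hc; apply: prl0 => i; rewrite mem_iota add0n => /andP [_ Hi]; exact: Hc.
pose Hs_ g := exists d, mk g = lc d m.
pose G0 g := exists c, g = P0 c.
have indep_p : forall c d, lc c p = lc d m -> forall i, (i < size p)%N -> c i = 0.
  by move=> c d E; apply: (Ip c (fun i => - d i)); rewrite lcN E subrr.
have Pm0 : forall d, PQ (lc d m) -> lc d m = 0 by move=> d /Im H; apply: lc0.
have HsubH : Ksubgroup pw Hs_.
  split.
  - by exists (fun _ => 0); rewrite lc0.
  - move=> x y [c Hc] [d Hd]; exists (fun i => c i + d i).
    by rewrite lcD -Hc -Hd addQE.
  - move=> x [c Hc]; exists (fun i => - c i).
    by rewrite lcN -Hc oppQE.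
  - move=> x a [c Hc]; exists (fun i => a * c i).
    by rewrite lcZ -Hc scaleQE.
have HsubG0 : Ksubgroup pw G0.
  split.
  - by exists (fun _ => 0); rewrite P0_1.
  - by move=> _ _ [c ->] [d ->]; exists (fun i => c i + d i); rewrite /P0 (prl_mul Hz).
  - by move=> _ [c ->]; exists (fun i => - c i); rewrite /P0 (prl_inv Hz).
  - by move=> _ a [c ->]; exists (fun i => a * c i); rewrite /P0 (prl_pw Hz).
have G0_Z : forall x, G0 x -> Zc x by move=> _ [c ->].
have decomp : forall g, exists c d, mk g = lc c p + lc d m := fun g => Hpm (mk g).
have Hsplit : forall g, exists c, Hs_ (g ** inv (P0 c)).
  move=> g; have [c [d E]] := decomp g; exists c, d.
  by rewrite -addQE -oppQE E mkP0 addrAC subrr add0r.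
exists Hs_, G0; split => //.
- split => //.
  + by move=> x Gx; split => // g _; exact: G0_Z.
  + move=> _ [c ->] [Ix _]; apply: P0_1; apply: (indep_p c (fun _ => 0)).
    by rewrite (lc0 (c:=fun _ => 0) (s:=m)) // -mkP0; apply/mk_eq0.
  + move=> z [_ Zz].
    have Zz' : Zc z by move=> g; apply: Zz.
    have [c [d E]] := decomp z.
    have Pd : PQ (lc d m).
      have -> : lc d m = mk z - lc c p by rewrite E addrC addKr.
      by apply: (submB PQ_subm); [exists z | apply: (subm_lc _ PQ_subm Pp)].
    rewrite (Pm0 d Pd) addr0 -mkP0 in E.
    exists (P0 c), (inv (P0 c) ** z); split.
    * by exists c.
    * split; first exact: (proj1 (mk_eq _ _) (esym E)).
      by split => // g _; apply: ZM; [apply: ZV; exact: P0Z | exact: Zz'].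
    * by rewrite mulKVg.
- split.
  + move=> x y [d Hd]; exists d; rewrite -Hd gconjE -addQE.
    have -> : mk (gcomm x y) = 0 by apply/mk_eq0; apply: D_Ii; apply: Dcomm.
    by rewrite addr0.
  + by move=> x y Gx; rewrite gconj_id' //; exact: G0_Z.
  + move=> x [d Hd] [c Hc]; subst x; apply: P0_1; apply: (indep_p c d).
    by rewrite -mkP0.
  + move=> g; have [c Hc] := Hsplit g.
    exists (g ** inv (P0 c)), (P0 c); split => //; first by exists c.
    by rewrite mulgKV.
move=> z [Hz_ Zz].
have Zz' : Zc z.
  move=> g; have [c Hc] := Hsplit g.
  rewrite -(mulgKV g (P0 c)).
  by rewrite gmulA (Zz _ Hc) -gmulA -(P0Z c z) gmulA.
split => //.
have [d Hd] := Hz_.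
have Pd : PQ (lc d m) by rewrite -Hd; exists z.
have : mk z = 0 by rewrite Hd; exact: Pm0.
move/mk_eq0 => [a [a0 Ha]]; exists a; split => //.
move: Ha; apply: Kgen_min; first exact: Kgen_sub.
move=> _ [x [y [_ _ ->]]].
have [c Hc] := Hsplit x; have [c' Hc'] := Hsplit y.
apply: Kgen_in; exists (x ** inv (P0 c)), (y ** inv (P0 c')); split => //.
by rewrite -(gcomm_central (x ** inv (P0 c)) (y ** inv (P0 c')) (P0Z c) (P0Z c')) !mulgKV.
Qed.

End KGrp.

End Aux.

Theorem mainTheorem11 (K : idomainType) (hbin : is_binomial K) (hpid : is_PID K)
  (G : grp) (pw : G -> K -> G) (hKG : is_nil2_Kgroup pw)
  (hfg : Kfin_gen pw) (htf : Ktorsion_free pw) :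
  regular pw.
Proof.
exact: (@Aux.regular_main K G pw (conj hKG (conj htf hbin)) hfg hpid).
Qed.
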